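(* Let $\lambda_i \ge 0$, $\mu \ge 0$, $\alpha_i \in (0,1]$, $\sigma_i^2 > 0$, $t_i \in \mathbb{R}$, and let $h_i \neq 0$ be a fixed fading coefficient. Consider the maximization problem $$\sup_{p_i \ge 0} \left\{ -\frac{\lambda_i}{\alpha_i}\bigl(t_i - r_i(p_i,h_i)\bigr)_+ - \mu p_i \right\}, \qquad r_i(p_i,h_i) = \log\left(1 + \frac{p_i h_i^2}{\sigma_i^2}\right).$$ If $(\lambda_i,\mu) \neq (0,0)$, then an optimal solution of this problem is $$p_i^*(h_i) = \min\left\{ \left(\frac{\lambda_i}{\mu\alpha_i} - \frac{\sigma_i^2}{h_i^2}\right)_+,\ \frac{\sigma_i^2\left(e^{(t_i)_+}-1\right)}{h_i^2} \right\}.$$ If $(\lambda_i,\mu) = (0,0)$, then $p_i^* = 0$ is optimal.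
   Context: $(x)_+ = \max\{x,0\}$. When $\mu = 0$ and $\lambda_i>0$, the quantity $\frac{\lambda_i}{\mu\alpha_i}$ is interpreted as $+\infty$, so that the minimum equals its second argument. The problem arises as the per-terminal power-allocation subproblem of the Lagrangian dual of a CV@R-constrained (risk-aware) power allocation problem, with $\lambda_i,\mu$ dual variables, $\alpha_i$ a CV@R confidence level, $\sigma_i^2$ the noise variance, and $t_i$ an auxiliary (value-at-risk) variable. *)

(* Defs.v *)
From Stdlib Require Import Reals Lra.
Open Scope R_scope.

Definition pos_part (x : R) : R := Rmax x 0.

Definition rate (sigma2 p h : R) : R := ln (1 + p * h ^ 2 / sigma2).

Definition objective (lam mu alpha sigma2 t h p : R) : R :=
  - (lam / alpha) * pos_part (t - rate sigma2 p h) - mu * p.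

Definition is_optimal (lam mu alpha sigma2 t h p : R) : Prop :=
  0 <= p /\
  forall q : R, 0 <= q -> objective lam mu alpha sigma2 t h q <= objective lam mu alpha sigma2 t h p.

(* closed-form p^*; when mu = 0 the term lam/(mu alpha) is +infinity
   (for lam > 0), so the min equals its second argument. *)
Definition p_star (lam mu alpha sigma2 t h : R) : R :=
  let cap := sigma2 * (exp (pos_part t) - 1) / h ^ 2 in
  if Req_EM_T mu 0 then cap
  else Rmin (pos_part (lam / (mu * alpha) - sigma2 / h ^ 2)) cap.

(* Main.v *)
Require Import Defs.
From Stdlib Require Import Reals.
From Stdlib Require Import Lra.
Open Scope R_scope.

Definition obj (c mu k t q : R) : R := - c * pos_part (t - ln (1 + q * k)) - mu * q.

Lemma ln_le_m1 z : 0 < z -> ln z <= z - 1.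
Proof. intro Hz. pose proof (exp_ineq1_le (ln z)). rewrite exp_ln in H; lra. Qed.

Lemma ln_conc x y : 0 < x -> 0 < y -> ln y <= ln x + (y - x) / x.
Proof.
  intros Hx Hy.
  replace y with (x * (y / x)) at 1 by (field; lra).
  rewrite ln_mult; [| lra | apply Rdiv_lt_0_compat; lra].
  pose proof (ln_le_m1 (y / x) ltac:(apply Rdiv_lt_0_compat; lra)).
  replace ((y - x) / x) with (y / x - 1) by (field; lra). lra.
Qed.

Lemma pos_ge0 x : 0 <= pos_part x.
Proof. unfold pos_part. apply Rmax_r. Qed.
Lemma pos_ge x : x <= pos_part x.
Proof. unfold pos_part. apply Rmax_l. Qed.
Lemma pos_of_nonpos x : x <= 0 -> pos_part x = 0.
Proof. unfold pos_part. intro; apply Rmax_right; lra. Qed.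
Lemma pos_of_nonneg x : 0 <= x -> pos_part x = x.
Proof. unfold pos_part. intro; apply Rmax_left; lra. Qed.

Lemma exp_pos_ge1 t : 1 <= exp (pos_part t).
Proof. pose proof (exp_ineq1_le (pos_part t)); pose proof (pos_ge0 t); lra. Qed.

Lemma capA c mu k t : 0 <= c -> 0 <= mu -> 0 < k ->
  let cap := (exp (pos_part t) - 1) / k in
  (cap = 0 \/ mu * (1 + k * cap) <= c * k) ->
  0 <= cap /\ forall q, 0 <= q -> obj c mu k t q <= obj c mu k t cap.
Proof.
  intros Hc Hmu Hk cap Hcond.
  pose proof (exp_pos_ge1 t) as He.
  assert (Hcap0 : 0 <= cap) by (unfold cap; apply Rmult_le_pos; [lra | left; apply Rinv_0_lt_compat; lra]).
  assert (Hx : 1 + cap * k = exp (pos_part t)) by (unfold cap; field; lra).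
  split; [exact Hcap0|].
  intros q Hq. unfold obj. rewrite Hx, ln_exp.
  assert (Hpp : pos_part (t - pos_part t) = 0) by (apply pos_of_nonpos; pose proof (pos_ge t); lra).
  rewrite Hpp.
  destruct (Rle_dec cap q) as [Hle|Hlt].
  - pose proof (pos_ge0 (t - ln (1 + q * k))).
    assert (0 <= c * pos_part (t - ln (1 + q * k))) by (apply Rmult_le_pos; lra).
    assert (mu * cap <= mu * q) by (apply Rmult_le_compat_l; lra). lra.
  - apply Rnot_le_lt in Hlt.
    destruct Hcond as [H0 | Hcond]; [lra|].
    assert (Hexp1 : 1 < exp (pos_part t)) by (assert (0 < cap * k) by (apply Rmult_lt_0_compat; lra); lra).
    assert (Htp : 0 < pos_part t).
    { destruct (Rle_dec (pos_part t) 0); [|lra].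
      assert (pos_part t = 0) by (pose proof (pos_ge0 t); lra).
      rewrite H, exp_0 in Hexp1; lra. }
    assert (Ht : pos_part t = t).
    { unfold pos_part in *. destruct (Rle_dec t 0).
      - rewrite Rmax_right in Htp; lra.
      - apply Rmax_left; lra. }
    set (x := 1 + cap * k) in *.
    assert (Hxpos : 0 < x) by lra.
    assert (Hyq : 0 < 1 + q * k) by (assert (0 <= q * k) by (apply Rmult_le_pos; lra); lra).
    pose proof (ln_conc x (1 + q * k) Hxpos Hyq) as Hl.
    assert (Hlnx : ln x = t) by (rewrite Hx, ln_exp; lra).
    set (d := (1 + q * k - x) / x) in *.
    assert (Hdx : d * x = (q - cap) * k) by (assert (d * x = 1 + q * k - x) by (unfold d; unfold Rdiv; rewrite Rmult_assoc, Rinv_l by lra; ring); rewrite H; unfold x; ring).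
    (* c*(t - ln(1+qk)) >= c*(-d) >= mu*(cap-q) *)
    assert (H1 : mu * (cap - q) <= c * - d).
    { assert (mu * (cap - q) * x <= c * - d * x).
      { replace (c * - d * x) with (c * k * (cap - q)) by (replace (c * - d * x) with (- c * (d * x)) by ring; rewrite Hdx; ring).
        replace (mu * (cap - q) * x) with (mu * (1 + k * cap) * (cap - q)) by (unfold x; ring).
        apply Rmult_le_compat_r; lra. }
      apply Rmult_le_reg_r with x; lra. }
    pose proof (pos_ge (t - ln (1 + q * k))).
    assert (c * - d <= c * pos_part (t - ln (1 + q * k))) by (apply Rmult_le_compat_l; lra).
    lra.
Qed.

Lemma intB c mu k t : 0 <= c -> 0 < mu -> 0 < k ->
  let cap := (exp (pos_part t) - 1) / k in
  let p := pos_part (c / mu - 1 / k) in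
  p < cap -> forall q, 0 <= q -> obj c mu k t q <= obj c mu k t p.
Proof.
  intros Hc Hmu Hk cap p Hpc q Hq.
  pose proof (pos_ge0 (c / mu - 1 / k)) as Hp0. fold p in Hp0.
  assert (Hx : 1 + cap * k = exp (pos_part t)) by (unfold cap; field; lra).
  assert (Hcpos : 0 < cap) by lra.
  assert (Htp : 0 < pos_part t).
  { destruct (Rle_dec (pos_part t) 0); [|lra].
    assert (pos_part t = 0) by (pose proof (pos_ge0 t); lra).
    rewrite H, exp_0 in Hx. nra. }
  assert (Ht : pos_part t = t).
  { unfold pos_part in *. destruct (Rle_dec t 0).
    - rewrite Rmax_right in Htp; lra.
    - apply Rmax_left; lra. }
  assert (Hlp : ln (1 + p * k) < t).
  { rewrite <- Ht, <- (ln_exp (pos_part t)), <- Hx. apply ln_increasing; nra. }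
  unfold obj.
  rewrite (pos_of_nonneg (t - ln (1 + p * k))) by lra.
  pose proof (pos_ge (t - ln (1 + q * k))).
  assert (Hg : - c * pos_part (t - ln (1 + q * k)) <= - c * (t - ln (1 + q * k)))
    by (apply Rmult_le_compat_neg_l; lra).
  assert (Hyq : 0 < 1 + q * k) by (assert (0 <= q * k) by (apply Rmult_le_pos; lra); lra).
  destruct (Rle_dec (c / mu - 1 / k) 0) as [Hn|Hn].
  - assert (Hp : p = 0) by (apply pos_of_nonpos; lra).
    rewrite Hp in *.
    assert (Hck : c * k <= mu).
    { assert (c / mu * (mu * k) <= 1 / k * (mu * k)) by (apply Rmult_le_compat_r; nra).
      replace (c / mu * (mu * k)) with (c * k) in H0 by (field; lra).
      replace (1 / k * (mu * k)) with mu in H0 by (field; lra). lra. }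
    pose proof (ln_le_m1 (1 + q * k) Hyq).
    replace (1 + 0 * k) with 1 in * by ring. rewrite ln_1 in *.
    assert (c * (q * k) <= mu * q) by nra. nra.
  - apply Rnot_le_lt in Hn.
    assert (Hp : p = c / mu - 1 / k) by (apply pos_of_nonneg; lra).
    assert (Hcp : 0 < c).
    { destruct (Rle_lt_dec c 0); [|lra].
      assert (c = 0) by lra. subst c.
      assert (0 / mu - 1 / k < 0). { unfold Rdiv. rewrite Rmult_0_l. 
        pose proof (Rinv_0_lt_compat k Hk). lra. } lra. }
    assert (Hxp : 1 + p * k = c * k / mu) by (rewrite Hp; field; lra).
    assert (Hxpos : 0 < 1 + p * k) by nra.
    pose proof (ln_conc (1 + p * k) (1 + q * k) Hxpos Hyq) as Hl.
    assert (Heq : c * ((1 + q * k - (1 + p * k)) / (1 + p * k)) = mu * (q - p)).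
    { rewrite Hxp, Hp. field. repeat split; lra. }
    assert (c * ln (1 + q * k) <= c * ln (1 + p * k) + mu * (q - p)).
    { rewrite <- Heq, <- Rmult_plus_distr_l. apply Rmult_le_compat_l; lra. }
    nra.
Qed.

Theorem theorem1 (lam mu alpha sigma2 t h : R) :
  0 <= lam -> 0 <= mu -> 0 < alpha <= 1 -> 0 < sigma2 -> h <> 0 ->
  ((lam, mu) <> (0, 0) -> is_optimal lam mu alpha sigma2 t h (p_star lam mu alpha sigma2 t h)) /\
  ((lam, mu) = (0, 0) -> is_optimal lam mu alpha sigma2 t h 0).
Proof.
  intros Hl Hmu Ha Hs Hh.
  assert (Hh2 : 0 < h ^ 2) by (apply pow_lt_pos_nonzero || nra).
  set (k := h ^ 2 / sigma2).
  assert (Hk : 0 < k) by (apply Rdiv_lt_0_compat; lra).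
  set (c := lam / alpha).
  assert (Hc : 0 <= c) by (apply Rmult_le_pos; [lra | left; apply Rinv_0_lt_compat; lra]).
  assert (Hobj : forall q, objective lam mu alpha sigma2 t h q = obj c mu k t q).
  { intro q. unfold objective, obj, rate, c, k. replace (q * h ^ 2 / sigma2) with (q * (h ^ 2 / sigma2)) by (unfold Rdiv; ring); reflexivity. }
  assert (Hcap : sigma2 * (exp (pos_part t) - 1) / h ^ 2 = (exp (pos_part t) - 1) / k)
    by (unfold k; field; lra).
  split.
  - intros _. unfold is_optimal, p_star. rewrite Hcap.
    destruct (Req_EM_T mu 0) as [H0|H0].
    + subst mu. destruct (capA c 0 k t Hc (Rle_refl 0) Hk) as [A B].
      { right. nra. }
      split; [exact A|]. intros q Hq. rewrite !Hobj. apply B; exact Hq.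
    + assert (Hmp : 0 < mu) by lra.
      assert (HP : lam / (mu * alpha) - sigma2 / h ^ 2 = c / mu - 1 / k)
        by (unfold c, k; field; repeat split; lra).
      rewrite HP.
      set (cap := (exp (pos_part t) - 1) / k).
      destruct (Rle_dec cap (pos_part (c / mu - 1 / k))) as [Hle|Hlt].
      * rewrite Rmin_right by exact Hle.
        destruct (capA c mu k t Hc Hmu Hk) as [A B].
        { destruct (Req_dec cap 0) as [Z|Z]; [left; exact Z|right].
          pose proof (pos_ge0 (c / mu - 1 / k)).
          assert (A0 : 0 <= cap) by (unfold cap; apply Rmult_le_pos;
            [pose proof (exp_pos_ge1 t); lra | left; apply Rinv_0_lt_compat; lra]).
          assert (Hcc : cap <= c / mu - 1 / k).
          { destruct (Rle_dec (c / mu - 1 / k) 0) as [n|n].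
            - rewrite pos_of_nonpos in Hle by lra. lra.
            - rewrite pos_of_nonneg in Hle by lra. lra. }
          fold cap.
          assert (cap * (mu * k) <= (c / mu - 1 / k) * (mu * k)) by (apply Rmult_le_compat_r; nra).
          replace ((c / mu - 1 / k) * (mu * k)) with (c * k - mu) in H1 by (field; lra).
          nra. }
        split; [exact A|]. intros q Hq. rewrite !Hobj. apply B; exact Hq.
      * apply Rnot_le_lt in Hlt. rewrite Rmin_left by lra.
        split; [apply pos_ge0|]. intros q Hq. rewrite !Hobj.
        apply (intB c mu k t Hc Hmp Hk); assumption.
  - intros E. injection E as E1 E2. subst lam mu.
    split; [lra|]. intros q Hq. rewrite !Hobj. unfold obj, c.
    unfold Rdiv. rewrite Rmult_0_l. lra.
Qed.
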